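(* Let $R$ be a unital ring and let $(P,Q,\psi)$ be a unital $R$-system. Suppose that $(S,T,\sigma,B)$ is a semi-full covariant representation of $(P,Q,\psi)$, that $(P,Q,\psi)$ satisfies Condition (FS'), and that the ideal $I^{(k)}_{\psi,\sigma}$ of $B_0$ is unital (has a multiplicative identity) for every $k\ge0$. Then $B$ is epsilon-strongly $\mathbb{Z}$-graded.
   Context: For additive subsets $X,Y$ of a ring, $XY$ is the additive subgroup generated by products $xy$. For rings $A,B$, an $A$-$B$-bimodule $M$ is unital if there exist $a\in A,b\in B$ with $ax=x=xb$ for all $x\in M$. A $\mathbb{Z}$-graded ring $B=\bigoplus_iB_i$ is epsilon-strongly graded if each $B_i$ is a unital $B_iB_{-i}$-$B_{-i}B_i$-bimodule. An $R$-system is a triple $(P,Q,\psi)$ with $P,Q$ $R$-bimodules and $\psi:P\otimes_RQ\to R$ an $R$-bimodule homomorphism; it is unital if $R$ is unital and $1_R$ acts as identity on both sides of $P$ and $Q$. Put $P^{\otimes0}=Q^{\otimes0}=R$, $\psi_0(r\otimes r')=rr'$, $\psi_1=\psi$, and for $n>1$: $Q^{\otimes n}=Q^{\otimes(n-1)}\otimes_RQ$, $P^{\otimes n}=P\otimes_RP^{\otimes(n-1)}$, $\psi_n((p_1\otimes p_2)\otimes(q_2\otimes q_1))=\psi(p_1\psi_{n-1}(p_2\otimes q_2)\otimes q_1)$. A covariant representation is a tuple $(S,T,\sigma,B)$ with $B$ a ring, $S:P\to B$, $T:Q\to B$ additive maps, $\sigma:R\to B$ a ring homomorphism, with $S(pr)=S(p)\sigma(r)$,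 $S(rp)=\sigma(r)S(p)$, $T(qr)=T(q)\sigma(r)$, $T(rq)=\sigma(r)T(q)$, $\sigma(\psi(p\otimes q))=S(p)T(q)$. It is graded if $B$ is generated as a ring by $\sigma(R)\cup S(P)\cup T(Q)$ and $B$ carries a $\mathbb{Z}$-grading with $\sigma(R)\subseteq B_0$, $T(Q)\subseteq B_1$, $S(P)\subseteq B_{-1}$. For a graded covariant representation and $k\ge0$, $I^{(k)}_{\psi,\sigma}$ is the ideal of $B_0$ generated by $\{\sigma(\psi_k(p\otimes q)):p\in P^{\otimes k},q\in Q^{\otimes k}\}$; the (graded) representation is semi-full if $B_{-k}B_k=I^{(k)}_{\psi,\sigma}$ for all $k\ge0$. For $q\in Q,p\in P$ let $\theta_{q,p}(x)=q\psi(p\otimes x)$ ($x\in Q$) and $\theta_{p,q}(y)=\psi(y\otimes q)p$ ($y\in P$); $\mathcal{F}_P(Q)$, $\mathcal{F}_Q(P)$ are the additive groups generated by these maps. Condition (FS'): there exist $\Theta\in\mathcal{F}_P(Q)$, $\Phi\in\mathcal{F}_Q(P)$ with $\Theta(q)=q$ and $\Phi(p)=p$ for all $q\in Q,p\in P$. *)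

(* Defs.v *)
From HB Require Import structures.
From mathcomp Require Import all_boot all_order all_algebra.
Set Implicit Arguments. Unset Strict Implicit. Unset Printing Implicit Defensive.
Import GRing.Theory.
Local Open Scope ring_scope.

Definition is_bimodule (R : pzRingType) (M : zmodType)
  (l : R -> M -> M) (r : M -> R -> M) : Prop :=
  (forall a x y, l a (x + y) = l a x + l a y) /\
  (forall a b x, l (a + b) x = l a x + l b x) /\
  (forall a b x, l (a * b) x = l a (l b x)) /\
  (forall x y a, r (x + y) a = r x a + r y a) /\
  (forall x a b, r x (a + b) = r x a + r x b) /\
  (forall x a b, r x (a * b) = r (r x a) b) /\
  (forall a x b, r (l a x) b = l a (r x b)).

Definition unital_bimodule (R : pzRingType) (M : zmodType)
  (l : R -> M -> M) (r : M -> R -> M) : Prop :=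
  forall x, l 1 x = x /\ r x 1 = x.

(* psi : P (x)_R Q -> R, an R-bimodule homomorphism, given through the
   universal property: an R-balanced biadditive map that is R-bilinear on
   the outer sides. *)
Definition is_Rsystem_map (R : pzRingType) (P Q : zmodType)
  (lP : R -> P -> P) (rP : P -> R -> P) (lQ : R -> Q -> Q) (rQ : Q -> R -> Q)
  (psi : P -> Q -> R) : Prop :=
  [/\ (forall p p' q, psi (p + p') q = psi p q + psi p' q),
      (forall p q q', psi p (q + q') = psi p q + psi p q'),
      (forall p a q, psi (rP p a) q = psi p (lQ a q)),
      (forall a p q, psi (lP a p) q = a * psi p q) &
      (forall p q a, psi p (rQ q a) = psi p q * a)].

Definition unital_Rsystem (R : pzRingType) (P Q : zmodType)
  (lP : R -> P -> P) (rP : P -> R -> P) (lQ : R -> Q -> Q) (rQ : Q -> R -> Q)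
  (psi : P -> Q -> R) : Prop :=
  [/\ is_bimodule lP rP, is_bimodule lQ rQ, is_Rsystem_map lP rP lQ rQ psi,
      unital_bimodule lP rP & unital_bimodule lQ rQ].

(* psi_n on simple tensors.  ps = [:: p1; p2; ...; pn] stands for
   p1 (x) p2 (x) ... (x) pn in P^{(x)n} = P (x) P^{(x)(n-1)}, and
   qs = [:: q1; q2; ...; qn] stands for qn (x) ... (x) q2 (x) q1 in
   Q^{(x)n} = Q^{(x)(n-1)} (x) Q, so that
   psi_n((p1 (x) p2) (x) (q2 (x) q1)) = psi(p1 psi_{n-1}(p2 (x) q2) (x) q1). *)
Fixpoint psiN (R : pzRingType) (P Q : zmodType) (rP : P -> R -> P)
  (psi : P -> Q -> R) (ps : seq P) (qs : seq Q) {struct ps} : R :=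
  match ps, qs with
  | [:: p], [:: q] => psi p q
  | p :: ps', q :: qs' => psi (rP p (psiN rP psi ps' qs')) q
  | _, _ => 0
  end.

Inductive addgen (B : pzRingType) (G : B -> Prop) : B -> Prop :=
  | addgen_in x : G x -> addgen G x
  | addgen0 : addgen G 0
  | addgenB x y : addgen G x -> addgen G y -> addgen G (x - y).

Definition prodset (B : pzRingType) (X Y : B -> Prop) : B -> Prop :=
  addgen (fun b => exists x y, [/\ X x, Y y & b = x * y]).

Inductive ringgen (B : pzRingType) (G : B -> Prop) : B -> Prop :=
  | ringgen_in x : G x -> ringgen G x
  | ringgen0 : ringgen G 0
  | ringgenB x y : ringgen G x -> ringgen G y -> ringgen G (x - y)
  | ringgenM x y : ringgen G x -> ringgen G y -> ringgen G (x * y).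

Inductive idealgen (B : pzRingType) (A G : B -> Prop) : B -> Prop :=
  | idealgen_in x : G x -> idealgen A G x
  | idealgen0 : idealgen A G 0
  | idealgenB x y : idealgen A G x -> idealgen A G y -> idealgen A G (x - y)
  | idealgenMl a x : A a -> idealgen A G x -> idealgen A G (a * x)
  | idealgenMr x a : A a -> idealgen A G x -> idealgen A G (x * a).

Definition Zgrading (B : pzRingType) (Bg : int -> B -> Prop) : Prop :=
  [/\ (forall i, Bg i 0 /\ (forall x y, Bg i x -> Bg i y -> Bg i (x - y))),
      (forall i j x y, Bg i x -> Bg j y -> Bg (i + j) (x * y)),
      (forall b : B, exists (s : seq int) (x : int -> B),
          [/\ uniq s, (forall i, Bg i (x i)) & b = \sum_(i <- s) x i]) &
      (forall (s : seq int) (x : int -> B), uniq s -> (forall i, Bg i (x i)) ->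
          \sum_(i <- s) x i = 0 -> forall i, i \in s -> x i = 0)].

Definition unital_in_bimodule (B : pzRingType) (A C M : B -> Prop) : Prop :=
  exists a c, [/\ A a, C c & forall x, M x -> a * x = x /\ x * c = x].

Definition epsilon_strongly_graded (B : pzRingType) (Bg : int -> B -> Prop) : Prop :=
  Zgrading Bg /\
  forall i : int, unital_in_bimodule (prodset (Bg i) (Bg (- i)))
                                     (prodset (Bg (- i)) (Bg i)) (Bg i).

Definition covariant_rep (R : pzRingType) (P Q : zmodType)
  (lP : R -> P -> P) (rP : P -> R -> P) (lQ : R -> Q -> Q) (rQ : Q -> R -> Q)
  (psi : P -> Q -> R) (B : pzRingType)
  (S : P -> B) (T : Q -> B) (sigma : R -> B) : Prop :=
  (forall p p', S (p + p') = S p + S p') /\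
  (forall q q', T (q + q') = T q + T q') /\
  (forall a b, sigma (a + b) = sigma a + sigma b) /\
  (forall a b, sigma (a * b) = sigma a * sigma b) /\
  (forall p a, S (rP p a) = S p * sigma a /\ S (lP a p) = sigma a * S p) /\
  (forall q a, T (rQ q a) = T q * sigma a /\ T (lQ a q) = sigma a * T q) /\
  (forall p q, sigma (psi p q) = S p * T q).

Definition graded_rep (R : pzRingType) (P Q : zmodType) (B : pzRingType)
  (S : P -> B) (T : Q -> B) (sigma : R -> B) (Bg : int -> B -> Prop) : Prop :=
  [/\ (forall b, ringgen (fun x => (exists r, x = sigma r) \/ (exists p, x = S p)
                                   \/ (exists q, x = T q)) b),
      Zgrading Bg,
      (forall r, Bg 0 (sigma r)),
      (forall q, Bg 1 (T q)) &
      (forall p, Bg (-1) (S p))].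

(* generators of I^(k)_{psi,sigma} (on simple tensors; P^(x)0 = Q^(x)0 = R) *)
Definition Igen (R : pzRingType) (P Q : zmodType) (rP : P -> R -> P)
  (psi : P -> Q -> R) (B : pzRingType) (sigma : R -> B) (k : nat) : B -> Prop :=
  fun b => if k is 0 then exists r r' : R, b = sigma (r * r')
           else exists (ps : seq P) (qs : seq Q),
                  [/\ size ps = k, size qs = k & b = sigma (psiN rP psi ps qs)].

Definition Iideal (R : pzRingType) (P Q : zmodType) (rP : P -> R -> P)
  (psi : P -> Q -> R) (B : pzRingType) (sigma : R -> B) (Bg : int -> B -> Prop)
  (k : nat) : B -> Prop :=
  idealgen (Bg 0) (Igen rP psi sigma k).

Definition semi_full (R : pzRingType) (P Q : zmodType) (rP : P -> R -> P)
  (psi : P -> Q -> R) (B : pzRingType) (sigma : R -> B) (Bg : int -> B -> Prop) : Prop :=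
  forall (k : nat) (b : B),
    prodset (Bg (- (k%:Z))) (Bg k%:Z) b <-> Iideal rP psi sigma Bg k b.

Definition unital_subset (B : pzRingType) (I : B -> Prop) : Prop :=
  exists e, I e /\ forall x, I x -> e * x = x /\ x * e = x.

Definition condition_FS' (R : pzRingType) (P Q : zmodType)
  (lP : R -> P -> P) (rQ : Q -> R -> Q) (psi : P -> Q -> R) : Prop :=
  (exists Theta : seq (int * Q * P),
      forall x : Q, \sum_(t <- Theta) (rQ t.1.2 (psi t.2 x) *~ t.1.1) = x) /\
  (exists Phi : seq (int * P * Q),
      forall y : P, \sum_(t <- Phi) (lP (psi y t.2) t.1.2 *~ t.1.1) = y).

(* Main.v *)
Require Import Defs.
From HB Require Import structures.
From mathcomp Require Import all_boot all_order all_algebra.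
From mathcomp Require Import zify.
Set Implicit Arguments. Unset Strict Implicit. Unset Printing Implicit Defensive.
Import GRing.Theory.
Local Open Scope ring_scope.

Lemma addgenD (B : pzRingType) (G : B -> Prop) x y :
  addgen G x -> addgen G y -> addgen G (x + y).
Proof.
move=> hx hy; have -> : x + y = x - (0 - y) by rewrite sub0r opprK.
apply: addgenB => //; apply: addgenB => //; exact: addgen0.
Qed.

Lemma addgen_sum (B : pzRingType) (G : B -> Prop) (I : Type) (r : seq I) F :
  (forall i, addgen G (F i)) -> addgen G (\sum_(i <- r) F i).
Proof.
move=> h; elim: r => [|i r IH]; first by rewrite big_nil; exact: addgen0.
by rewrite big_cons; apply: addgenD.
Qed.

Lemma addgen_mulz (B : pzRingType) (G : B -> Prop) x n :
  addgen G x -> addgen G (x *~ n).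
Proof.
move=> hx; case: n => m; last first.
  rewrite NegzE mulrNz -sub0r; apply: addgenB; first exact: addgen0.
  rewrite -pmulrn; elim: m.+1 => [|j IH]; first by rewrite mulr0n; exact: addgen0.
  by rewrite mulrS; apply: addgenD.
rewrite -pmulrn; elim: m => [|j IH]; first by rewrite mulr0n; exact: addgen0.
by rewrite mulrS; apply: addgenD.
Qed.

Lemma prodset_sandwich (B : pzRingType) (X Y X' Y' : B -> Prop) (A C z : B) :
  (forall x, X x -> X' (A * x)) -> (forall y, Y y -> Y' (y * C)) ->
  prodset X Y z -> prodset X' Y' (A * z * C).
Proof.
move=> hX hY; elim=> [b [x [y [Hx Hy ->]]]| |u v _ IHu _ IHv].
- apply: addgen_in; exists (A * x), (y * C); split; auto; by rewrite !mulrA.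
- rewrite mulr0 mul0r; exact: addgen0.
- rewrite mulrBr mulrBl; exact: addgenB.
Qed.

Lemma prodset_right_id (B : pzRingType) (X Y : B -> Prop) (z x e : B) :
  prodset X Y z -> (forall y, Y y -> y * x * e = y * x) -> z * x * e = z * x.
Proof.
move=> hz hY; elim: hz => [b [u [v [Hu Hv ->]]]| |u v _ IHu _ IHv].
- by rewrite -!mulrA (mulrA v) hY.
- by rewrite !mul0r.
- by rewrite !mulrBl IHu IHv.
Qed.

Lemma prodset_left_id (B : pzRingType) (X Y : B -> Prop) (z x e : B) :
  prodset X Y z -> (forall u, X u -> e * (x * u) = x * u) -> e * (x * z) = x * z.
Proof.
move=> hz hX; elim: hz => [b [u [v [Hu Hv ->]]]| |u v _ IHu _ IHv].
- by rewrite !mulrA -(mulrA e) hX.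
- by rewrite !mulr0.
- by rewrite !mulrBr IHu IHv.
Qed.

Section AddF.
Lemma addf0 (U V : zmodType) (f : U -> V) :
  (forall x y, f (x + y) = f x + f y) -> f 0 = 0.
Proof.
move=> H; apply: (@addrI _ (f 0)); by rewrite -H !addr0.
Qed.

Lemma addfN (U V : zmodType) (f : U -> V) :
  (forall x y, f (x + y) = f x + f y) -> forall x, f (- x) = - f x.
Proof.
move=> H x; apply: (@addrI _ (f x)); by rewrite -H !subrr (addf0 H).
Qed.

Lemma addf_mulz (U V : zmodType) (f : U -> V) :
  (forall x y, f (x + y) = f x + f y) -> forall x n, f (x *~ n) = f x *~ n.
Proof.
move=> H x n; have hn : forall m, f (x *+ m) = f x *+ m.
  elim=> [|m IH]; first by rewrite !mulr0n (addf0 H).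
  by rewrite !mulrS H IH.
case: n => m; first by rewrite -!pmulrn hn.
by rewrite NegzE !mulrNz (addfN H) -!pmulrn hn.
Qed.

Lemma addf_sum (U V : zmodType) (f : U -> V) (I : Type) (r : seq I) F :
  (forall x y, f (x + y) = f x + f y) ->
  f (\sum_(i <- r) F i) = \sum_(i <- r) f (F i).
Proof.
move=> H; elim: r => [|i r IH]; first by rewrite !big_nil (addf0 H).
by rewrite !big_cons H IH.
Qed.
End AddF.

Definition prodF (V : Type) (B : pzRingType) (f : V -> B) (l : seq V) : B :=
  foldr (fun v acc => f v * acc) 1 l.

Lemma prodF_rcons (V : Type) (B : pzRingType) (f : V -> B) l v :
  prodF f (rcons l v) = prodF f l * f v.
Proof.
elim: l => [|u l IH] /=; first by rewrite mulr1 mul1r.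
by rewrite IH mulrA.
Qed.

Lemma sum_if_uniq (B : pzRingType) (s : seq int) (k : int) (f : B) :
  uniq s -> k \in s -> \sum_(d <- s) (if d == k then f else 0) = f.
Proof.
elim: s => [|d s IH] //= /andP [ds us]; rewrite big_cons inE.
case: (eqVneq d k) => [<-|nk] ks.
  rewrite big1_seq ?addr0 // => j /andP [_ js]; case: eqP => // E.
  by rewrite -E js in ds.
by rewrite add0r IH.

Qed.

Definition NM (R : pzRingType) (P Q : Type) (B : pzRingType)
  (S : P -> B) (T : Q -> B) (sigma : R -> B) (d : int) (w : B) : Prop :=
  exists r qs ps, w = sigma r * prodF T qs * prodF S ps /\
                  d = (size qs)%:Z - (size ps)%:Z.

Fixpoint aseq (B : pzRingType) (Q P : Type) (T : Q -> B) (S : P -> B)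
  (Th : seq (int * Q * P)) (k : nat) : B :=
  if k is k'.+1 then \sum_(t <- Th) (T t.1.2 * aseq T S Th k' * S t.2) *~ t.1.1
  else 1.

Fixpoint cseq (B : pzRingType) (Q P : Type) (T : Q -> B) (S : P -> B)
  (Ph : seq (int * P * Q)) (k : nat) : B :=
  if k is k'.+1 then \sum_(t <- Ph) (T t.2 * cseq T S Ph k' * S t.1.2) *~ t.1.1
  else 1.

Theorem mainTheorem9 (R : pzRingType) (P Q : zmodType)
  (lP : R -> P -> P) (rP : P -> R -> P) (lQ : R -> Q -> Q) (rQ : Q -> R -> Q)
  (psi : P -> Q -> R)
  (B : pzRingType) (S : P -> B) (T : Q -> B) (sigma : R -> B)
  (Bg : int -> B -> Prop) :
  unital_Rsystem lP rP lQ rQ psi ->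
  covariant_rep lP rP lQ rQ psi S T sigma ->
  graded_rep S T sigma Bg ->
  semi_full rP psi sigma Bg ->
  condition_FS' lP rQ psi ->
  (forall k : nat, unital_subset (Iideal rP psi sigma Bg k)) ->
  epsilon_strongly_graded Bg.
Proof.
move=> [bimP bimQ _ unP unQ] [SD [TD [sD [sM [Sact [Tact Spsi]]]]]].
move=> [gen Zg s0 T1 Sm1] hsf [[Theta HTh] [Phi HPh]] HI.
have Zg' := Zg; case: Zg' => [Zsub Zmul Zdec Zuniq].
have s1b : forall b, sigma 1 * b = b.
  move=> b; elim: (gen b) => {b} [x [[r ->]|[[p ->]|[q ->]]]| |x y _ IHx _ IHy|x y _ IHx _ IHy].
  - by rewrite -sM mul1r.
  - by rewrite -(Sact p 1).2 (unP p).1.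
  - by rewrite -(Tact q 1).2 (unQ q).1.
  - by rewrite mulr0.
  - by rewrite mulrBr IHx IHy.
  - by rewrite mulrA IHx.
have s1 : sigma 1 = 1 by rewrite -[RHS]s1b mulr1.
have Bg0 : forall i, Bg i 0 by move=> i; exact: (Zsub i).1.
have BgB : forall i x y, Bg i x -> Bg i y -> Bg i (x - y).
  by move=> i; exact: (Zsub i).2.
have BgD : forall i x y, Bg i x -> Bg i y -> Bg i (x + y).
  move=> i x y hx hy; have -> : x + y = x - (0 - y) by rewrite sub0r opprK.
  by apply: (BgB) => //; apply: (BgB).
have Bg1 : Bg 0 1 by rewrite -s1.
have NMsig : forall d w r', NM S T sigma d w -> NM S T sigma d (w * sigma r').
  move=> d w r' [r [qs [ps [-> ->]]]].
  case/lastP: ps => [|ps p].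
  - case/lastP: qs => [|qs q].
    + exists (r * r'), [::], [::]; split=> //=; by rewrite !mulr1 sM.
    + exists r, (rcons qs (rQ q r')), [::]; rewrite !size_rcons; split=> //.
      by rewrite /= !mulr1 !prodF_rcons (Tact q r').1 !mulrA.
  - exists r, qs, (rcons ps (rP p r')); rewrite !size_rcons; split=> //.
    by rewrite !prodF_rcons (Sact p r').1 !mulrA.
have NMS : forall d w p, NM S T sigma d w -> NM S T sigma (d - 1) (w * S p).
  move=> d w p [r [qs [ps [-> ->]]]].
  exists r, qs, (rcons ps p); rewrite prodF_rcons mulrA; split=> //.
  rewrite size_rcons; lia.
have NMT : forall d w q, NM S T sigma d w -> NM S T sigma (d + 1) (w * T q).
  move=> d w q [r [qs [ps [-> ->]]]].
  case/lastP: ps => [|ps p].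
  - exists r, (rcons qs q), [::]; rewrite prodF_rcons /= !mulr1 mulrA size_rcons.
    split=> //; lia.
  - have : NM S T sigma ((size qs)%:Z - (size (rcons ps p))%:Z + 1)
                (sigma r * prodF T qs * prodF S ps).
      by exists r, qs, ps; split=> //; rewrite size_rcons; lia.
    move/(NMsig _ _ (psi p q)).
    have -> : sigma r * prodF T qs * prodF S (rcons ps p) * T q =
              sigma r * prodF T qs * prodF S ps * (S p * T q)
      by rewrite prodF_rcons !mulrA.
    by rewrite -Spsi.
have NMN : forall d w, NM S T sigma d w -> NM S T sigma d (- w).
  move=> d w [r [qs [ps [-> ->]]]]; exists (- r), qs, ps; split=> //.
  by rewrite (addfN sD) !mulNr.
have pTBg : forall qs, Bg (size qs)%:Z (prodF T qs).
  elim=> [|q qs IH] //=; rewrite intS; exact: Zmul (T1 q) IH.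
have pSBg : forall ps, Bg (- (size ps)%:Z) (prodF S ps).
  elim=> [|p ps IH] //=; rewrite intS opprD; exact: Zmul (Sm1 p) IH.
have NMBg : forall d w, NM S T sigma d w -> Bg d w.
  move=> d w [r [qs [ps [-> ->]]]].
  have := Zmul _ _ _ _ (Zmul _ _ _ _ (s0 r) (pTBg qs)) (pSBg ps).
  by rewrite add0r.
pose Dec b := exists L : seq (int * B),
   (forall t, t \in L -> NM S T sigma t.1 t.2) /\ b = \sum_(t <- L) t.2.
have Dec0 : Dec 0 by exists [::]; rewrite big_nil.
have DecB : forall x y, Dec x -> Dec y -> Dec (x - y).
  move=> x y [L1 [H1 ->]] [L2 [H2 ->]].
  exists (L1 ++ map (fun t => (t.1, - t.2)) L2); split.
    move=> t; rewrite mem_cat => /orP [/H1 //|/mapP [u uL ->] /=].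
    exact/NMN/H2.
  by rewrite big_cat big_map /= sumrN.
have DecG : forall g dl, (forall d w, NM S T sigma d w -> NM S T sigma (d + dl) (w * g)) ->
    forall b, Dec b -> Dec (b * g).
  move=> g dl Hg b [L [HL ->]].
  exists (map (fun t => (t.1 + dl, t.2 * g)) L); split.
    move=> t /mapP [u uL ->] /=; exact/Hg/HL.
  by rewrite big_map mulr_suml.
have DecGood : forall g, forall b, Dec b -> Dec (b * g).
  move=> g; elim: (gen g) => {g} [x [[r ->]|[[p ->]|[q ->]]]| |x y _ IHx _ IHy|x y _ IHx _ IHy] b Hb.
  - apply: (DecG _ 0) Hb => d w; rewrite addr0; exact: NMsig.
  - apply: (DecG _ (-1)) Hb => d w; exact: NMS.
  - apply: (DecG _ 1) Hb => d w; exact: NMT.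
  - by rewrite mulr0.
  - by rewrite mulrBr; apply: DecB; auto.
  - by rewrite mulrA; auto.
have Dec_all : forall b, Dec b.
  move=> b; rewrite -(mul1r b); apply: DecGood.
  exists [:: (0, 1)]; split; last by rewrite big_seq1.
  move=> t; rewrite inE => /eqP -> /=; exists 1, [::], [::]; split=> //.
  by rewrite s1 !mulr1.
have extract : forall (k : int) x (Pr : B -> Prop), Pr 0 ->
    (forall u v, Pr u -> Pr v -> Pr (u + v)) ->
    (forall w, NM S T sigma k w -> Pr w) -> Bg k x -> Pr x.
  move=> k x Pr P0 PD PN; case: (Dec_all x) => L [HL ->] Hx.
  pose y := fun d => \sum_(t <- L | d == t.1) t.2.
  have Bgy : forall d, Bg d (y d).
    move=> d; rewrite /y big_seq_cond; apply: big_ind => //; first exact: BgD.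
    move=> t /andP [tL /eqP ->]; exact/NMBg/HL.
  have Pry : Pr (y k).
    rewrite /y big_seq_cond; apply: (big_ind Pr) => //.
    move=> t /andP [tL /eqP E]; apply: PN; rewrite E; exact: HL.
  have Hsum : forall s, uniq s -> {subset map fst L <= s} ->
      \sum_(d <- s) y d = \sum_(t <- L) t.2.
    move=> s us sub; rewrite /y; under eq_bigr do rewrite big_mkcond.
    rewrite exchange_big /=; apply: eq_big_seq => t tL.
    by apply: sum_if_uniq => //; apply: sub; apply: map_f.
  set s := undup (k :: map fst L).
  have us : uniq s by apply: undup_uniq.
  have ks : k \in s by rewrite mem_undup mem_head.
  pose z := fun d => y d - (if d == k then \sum_(t <- L) t.2 else 0).
  have Hz : z k = 0.
    apply: (Zuniq s z us) => //.
      by move=> d; apply: BgB => //; case: eqP => [->|_] //.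
    rewrite sumrB Hsum //; last first.
      by move=> d dL; rewrite mem_undup inE dL orbT.
    by rewrite sum_if_uniq // subrr.
  by move: Hz; rewrite /z eqxx => /eqP; rewrite subr_eq0 => /eqP <-.
have NMpos : forall (k : nat) w, NM S T sigma (Posz k.+1) w ->
    exists q y, w = T q * y /\ Bg k y.
  move=> k w [r [qs [ps [-> E]]]]; case: qs E => [|q qs] E.
    by move: E => /=; lia.
  exists (lQ r q), (prodF T qs * prodF S ps); split.
    by rewrite /= (Tact q r).2 !mulrA.
  apply: NMBg; exists 1, qs, ps; split; first by rewrite s1 mul1r.
  by move: E => /=; lia.
have NMng : forall (k : nat) w, NM S T sigma (- Posz k.+1) w ->
    exists y p, w = y * S p /\ Bg (- Posz k) y.
  move=> k w [r [qs [ps [-> E]]]]; case/lastP: ps E => [|ps p] E.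
    by move: E => /=; lia.
  exists (sigma r * prodF T qs * prodF S ps), p; split.
    by rewrite prodF_rcons mulrA.
  apply: NMBg; exists r, qs, ps; split=> //; move: E; rewrite size_rcons; lia.
have Afix : forall (k : nat) x, Bg k x -> aseq T S Theta k * x = x.
  elim=> [|k IH] x Hx; first by rewrite /= mul1r.
  apply: (extract (Posz k.+1) x (fun x => aseq T S Theta k.+1 * x = x)) => //.
  - by rewrite mulr0.
  - by move=> u v hu hv; rewrite mulrDr hu hv.
  move=> w /NMpos [q [y [-> Hy]]].
  rewrite /= mulr_suml.
  transitivity (\sum_(t <- Theta) (T (rQ t.1.2 (psi t.2 q)) * y) *~ t.1.1).
    apply: eq_bigr => t _; rewrite mulrzAl; congr (_ *~ _).
    rewrite -!mulrA [S t.2 * (T q * y)]mulrA -Spsi IH; last first.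
      by move: (Zmul _ _ _ _ (s0 (psi t.2 q)) Hy); rewrite add0r.
    by rewrite (Tact _ _).1 mulrA.
  under eq_bigr do rewrite -mulrzAl.
  rewrite -mulr_suml; under eq_bigr do rewrite -(addf_mulz TD).
  by rewrite -(addf_sum _ _ TD) HTh.
have Cfix : forall (k : nat) x, Bg (- Posz k) x -> x * cseq T S Phi k = x.
  elim=> [|k IH] x Hx; first by rewrite /= mulr1.
  apply: (extract (- Posz k.+1) x (fun x => x * cseq T S Phi k.+1 = x)) => //.
  - by rewrite mul0r.
  - by move=> u v hu hv; rewrite mulrDl hu hv.
  move=> w /NMng [y [p [-> Hy]]].
  rewrite /= mulr_sumr.
  transitivity (\sum_(t <- Phi) (y * S (lP (psi p t.2) t.1.2)) *~ t.1.1).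
    apply: eq_bigr => t _; rewrite mulrzAr; congr (_ *~ _).
    rewrite !mulrA -(mulrA y) -Spsi IH; last first.
      by move: (Zmul _ _ _ _ Hy (s0 (psi p t.2))); rewrite addr0.
    by rewrite (Sact _ _).2 mulrA.
  under eq_bigr do rewrite -mulrzAr.
  rewrite -mulr_sumr; under eq_bigr do rewrite -(addf_mulz SD).
  by rewrite -(addf_sum _ _ SD) HPh.
have amem : forall k : nat, prodset (Bg k) (Bg (- Posz k)) (aseq T S Theta k).
  elim=> [|k IH] /=.
    apply: addgen_in; exists 1, 1; split=> //; by rewrite mulr1.
  apply: addgen_sum => t; apply: addgen_mulz.
  apply: prodset_sandwich IH.
    move=> x Hx; rewrite intS; exact: Zmul (T1 _) Hx.
  move=> x Hx; rewrite intS opprD addrC; exact: Zmul Hx (Sm1 _).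
have cmem : forall k : nat, prodset (Bg k) (Bg (- Posz k)) (cseq T S Phi k).
  elim=> [|k IH] /=.
    apply: addgen_in; exists 1, 1; split=> //; by rewrite mulr1.
  apply: addgen_sum => t; apply: addgen_mulz.
  apply: prodset_sandwich IH.
    move=> x Hx; rewrite intS; exact: Zmul (T1 _) Hx.
  move=> x Hx; rewrite intS opprD addrC; exact: Zmul Hx (Sm1 _).
split=> //; case=> [k|m].
- have [e [Ie He]] := HI k.
  exists (aseq T S Theta k), e; split; [exact: amem | exact/(hsf k e).2 |].
  move=> x Hx; split; first exact: Afix.
  have H := prodset_right_id (x := x) (e := e) (amem k).
  rewrite (Afix _ _ Hx) in H; apply: H => y Hy.
  apply: (He _ _).2; apply/(hsf k _).1; apply: addgen_in.
  by exists y, x; split.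
- rewrite NegzE opprK.
  have [e [Ie He]] := HI m.+1.
  exists e, (cseq T S Phi m.+1); split; [exact/(hsf m.+1 e).2 | exact: cmem |].
  move=> x Hx; split; last exact: Cfix.
  have H := prodset_left_id (x := x) (e := e) (cmem m.+1).
  rewrite (Cfix _ _ Hx) in H; apply: H => u Hu.
  apply: (He _ _).1; apply/(hsf m.+1 _).1; apply: addgen_in.
  by exists x, u; split.
Qed.
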